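(* Let $\tau\in\mathbb{Z}$ and let $m=2^\alpha a$, $l=2^\beta b$ with $a,b$ odd positive integers, $\alpha\ge1$, $\beta\ge0$. Then $$2^{2\alpha}\ \Big|\ (-1)^{m\tau+m+l}\binom{m}{l}\binom{m\tau+l-1}{m-1}-(-1)^{\frac{m\tau+m+l}{2}}\binom{m/2}{l/2}\binom{\frac{m\tau+l}{2}-1}{\frac{m}{2}-1},$$ where, when $\beta=0$, the second term is set to zero.
   Context: For integers $b\geq 0$ and $a\in\mathbb{Z}$ the binomial coefficient is defined by: $\binom{a}{b}=1$ if $b=0$; $\binom{a}{b}$ is the usual binomial coefficient if $b\geq 1$ and $a\geq 0$; and $\binom{a}{b}=(-1)^b\binom{-a+b-1}{b}$ if $b\geq1$ and $a<0$. *)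

(* Defs.v *)
From mathcomp Require Import all_boot all_order all_algebra.
Set Implicit Arguments. Unset Strict Implicit. Unset Printing Implicit Defensive.
Import Order.TTheory GRing.Theory Num.Theory.
Local Open Scope ring_scope.

Definition binZ (a : int) (b : nat) : int :=
  if b == 0%N then 1
  else if 0 <= a then ('C(`|a|%N, b))%:Z
  else (-1) ^+ b * ('C(`|a|%N + b - 1, b))%:Z.

Definition signz (k : int) : int := (-1) ^+ (odd `|k|%N).

(* Main.v *)
Require Import Defs.
From mathcomp Require Import all_boot all_order all_algebra intdiv zify ring.
Import Order.TTheory GRing.Theory Num.Theory.
Local Open Scope ring_scope.

Definition G (n : nat) (z : int) : int := \prod_(i < n) (z + Posz (2 * i + 1)%N).
Definition O (n : nat) : int := \prod_(i < n) Posz (2 * i + 1)%N.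

Lemma Gstep n z : G n (z + 2) * (z + 1) = G n z * (z + Posz (2 * n)%N + 1).
Proof.
case: n => [|n]; first by rewrite /G !big_ord0; ring.
rewrite /G [in LHS]big_ord_recr [in RHS]big_ord_recl /=.
have -> : \prod_(i < n) (z + 2 + Posz (2 * i + 1)) =
          \prod_(i < n) (z + Posz (2 * bump 0 i + 1)).
  by apply: eq_bigr => i _; rewrite /bump /=; lia.
have -> : z + 2 + Posz (2 * n + 1) = z + Posz (2 * n.+1) + 1 by lia.
have -> : z + Posz (2 * 0 + 1) = z + 1 by lia.
ring.
Qed.

Lemma revodd n w : \prod_(j < n) (w - Posz (2 * j + 1)%N) = G n (w - Posz (2 * n)%N).
Proof.
elim: n => [|n IH]; first by rewrite /G !big_ord0.
rewrite [in LHS]big_ord_recr IH /G [in RHS]big_ord_recl /=.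
have -> : \prod_(i < n) (w - Posz (2 * n.+1) + Posz (2 * bump 0 i + 1)) =
          \prod_(i < n) (w - Posz (2 * n) + Posz (2 * i + 1)).
  by apply: eq_bigr => i _; rewrite /bump /=; lia.
have -> : w - Posz (2 * n.+1) + Posz (2 * 0 + 1) = w - Posz (2 * n + 1) by lia.
ring.
Qed.

Lemma Gneg n : G n (- Posz (2 * n)%N) = (-1) ^+ n * O n.
Proof.
rewrite -[- _]add0r -revodd /O.
elim: n => [|n IH]; first by rewrite !big_ord0 expr0 mulr1.
by rewrite !big_ord_recr IH /= exprS; ring.
Qed.

Lemma cop2 e (x : int) : odd (absz x) -> coprimez (2 ^+ e) x.
Proof. move=> hx; apply: coprimezXl; by rewrite coprimezE /= coprime2n. Qed.

Lemma Ocop e n : coprimez (2 ^+ e) (O n).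
Proof.
elim: n => [|n IH]; first by rewrite /O big_ord0 coprimezE /= coprimen1.
rewrite /O big_ord_recr /= coprimezMr; apply/andP; split; first exact: IH.
by apply: cop2; lia.
Qed.

Lemma int_ind2 (P : int -> bool) (k0 : int) :
  (forall k, P (k + 1) = P k) -> P k0 -> forall k, P k.
Proof.
move=> hs h0.
have hp : forall n : nat, P (k0 + Posz n).
  elim=> [|n IH]; first by rewrite addr0.
  have -> : k0 + Posz n.+1 = (k0 + Posz n) + 1 by lia.
  by rewrite hs.
have hn : forall n : nat, P (k0 - Posz n).
  elim=> [|n IH]; first by rewrite subr0.
  rewrite -hs; have -> : k0 - Posz n.+1 + 1 = k0 - Posz n by lia.
  by [].
move=> k; case: (lerP k0 k) => hk.
  have -> : k = k0 + Posz `|k - k0|%N by lia. exact: hp.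
have -> : k = k0 - Posz `|k - k0|%N by lia. exact: hn.
Qed.

Section L.
Variable e : nat.
Let d : int := 2 ^+ e.

Lemma L1 n : (d %| (Posz (2 * n)%N) ^+ 2)%Z ->
  forall k : int, (d %| G n (2 * k + Posz (2 * n)%N) - (-1) ^+ n * G n (2 * k))%Z.
Proof.
move=> hdm.
pose P k := (d %| G n (2 * k + Posz (2 * n)%N) - (-1) ^+ n * G n (2 * k))%Z.
apply: (@int_ind2 P (- Posz n)).
  move=> k; rewrite /P.
  set z := 2 * k.
  have e1 := Gstep n z.
  have e2 := Gstep n (z + Posz (2 * n)%N).
  have -> : 2 * (k + 1) + Posz (2 * n)%N = (z + Posz (2 * n)%N) + 2 by rewrite /z; lia.
  have -> : 2 * (k + 1) = z + 2 by rewrite /z; lia.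
  set A := G n z in e1 *; set B := G n (z + 2) in e1 *.
  set C := G n (z + Posz (2 * n)%N) in e2 *.
  set E := G n (z + Posz (2 * n)%N + 2) in e2 *.
  set m := Posz (2 * n)%N in e1 e2 hdm *.
  have c1 : coprimez d ((z + 1) * (z + m + 1)).
    by rewrite coprimezMr; apply/andP; split; apply: cop2; rewrite /z /m; lia.
  have c2 : coprimez d ((z + m + m + 1) * (z + 1)).
    by rewrite coprimezMr; apply/andP; split; apply: cop2; rewrite /z /m; lia.
  rewrite -(Gauss_dvdzl _ c1) -[in RHS](Gauss_dvdzl _ c2).
  have -> : (E - (-1) ^+ n * B) * ((z + 1) * (z + m + 1)) =
     (C - (-1) ^+ n * A) * ((z + m + m + 1) * (z + 1)) - (-1) ^+ n * A * m ^+ 2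
     + ((z + 1) * (E * (z + m + 1) - C * (z + m + m + 1))
        - (-1) ^+ n * (z + m + 1) * (B * (z + 1) - A * (z + m + 1))) by ring.
  rewrite e2 e1 !subrr !mulr0 subrr addr0.
  apply/idP/idP => h.
    have : (d %| (-1) ^+ n * A * m ^+ 2)%Z by apply: dvdz_mull.
    move=> h2; have := rpredD h h2; by rewrite subrK.
  by apply: rpredB => //; apply: dvdz_mull.
rewrite /P.
have -> : 2 * - Posz n + Posz (2 * n) = 0 by lia.
have -> : 2 * - Posz n = - Posz (2 * n) by lia.
rewrite Gneg /G.
have -> : \prod_(i < n) (0 + Posz (2 * i + 1)) = O n by apply: eq_bigr => i _; rewrite add0r.
by rewrite mulrA -exprD -signr_odd oddD addbb expr0 mul1r subrr dvdz0.
Qed.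
End L.

Lemma signzM n (t : int) : signz (Posz n * t) = ((-1) ^+ n) ^+ `|t|%N.
Proof. by rewrite /signz abszM /= signr_odd exprM. Qed.

Section L2.
Variable e : nat.
Let d : int := 2 ^+ e.

Lemma L2 n : (d %| (Posz (2 * n)%N) ^+ 2)%Z ->
  forall k t : int, (d %| G n (2 * k + Posz (2 * n)%N * t) - signz (Posz n * t) * G n (2 * k))%Z.
Proof.
move=> hdm k t; rewrite signzM.
set s := (-1) ^+ n.
have ss : s * s = 1 by rewrite /s -exprD -signr_odd oddD addbb.
have hp : forall j : nat, (d %| G n (2 * k + Posz (2 * n)%N * Posz j) - s ^+ j * G n (2 * k))%Z.
  elim=> [|j IH]; first by rewrite mulr0 addr0 expr0 mul1r subrr dvdz0.
  have h1 := @L1 e n hdm (k + Posz n * Posz j).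
  have -> : 2 * k + Posz (2 * n) * Posz j.+1 = 2 * (k + Posz n * Posz j) + Posz (2 * n) by nia.
  have -> : G n (2 * (k + Posz n * Posz j) + Posz (2 * n)) - s ^+ j.+1 * G n (2 * k) =
     (G n (2 * (k + Posz n * Posz j) + Posz (2 * n)) - s * G n (2 * (k + Posz n * Posz j)))
     + s * (G n (2 * k + Posz (2 * n) * Posz j) - s ^+ j * G n (2 * k)).
    have -> : 2 * (k + Posz n * Posz j) = 2 * k + Posz (2 * n) * Posz j by nia.
    by rewrite exprS; ring.
  by apply: rpredD => //; apply: dvdz_mull.
have hn : forall j : nat, (d %| G n (2 * k - Posz (2 * n)%N * Posz j) - s ^+ j * G n (2 * k))%Z.
  elim=> [|j IH]; first by rewrite mulr0 subr0 expr0 mul1r subrr dvdz0.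
  have h1 := @L1 e n hdm (k - Posz n * Posz j.+1).
  have e1 : 2 * (k - Posz n * Posz j.+1) + Posz (2 * n) = 2 * k - Posz (2 * n) * Posz j by nia.
  have e2 : 2 * (k - Posz n * Posz j.+1) = 2 * k - Posz (2 * n) * Posz j.+1 by nia.
  rewrite e1 e2 in h1.
  have -> : G n (2 * k - Posz (2 * n) * Posz j.+1) - s ^+ j.+1 * G n (2 * k) =
    s * ((G n (2 * k - Posz (2 * n) * Posz j) - s ^+ j * G n (2 * k))
         - (G n (2 * k - Posz (2 * n) * Posz j) - s * G n (2 * k - Posz (2 * n) * Posz j.+1))).
    apply/eqP; rewrite -subr_eq0; apply/eqP.
    set X := G n (2 * k - Posz (2 * n) * Posz j.+1).
    set Y := G n (2 * k - Posz (2 * n) * Posz j).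
    have -> : X - s ^+ j.+1 * G n (2 * k) - s * (Y - s ^+ j * G n (2 * k) - (Y - s * X))
      = (1 - s * s) * X by rewrite exprS; ring.
    by rewrite ss subrr mul0r.
  by apply: dvdz_mull; apply: rpredB.
case: t => j.
  exact: hp.
rewrite NegzE /=.
have -> : Posz (2 * n) * - Posz j.+1 = - (Posz (2 * n) * Posz j.+1) by ring.
exact: hn.
Qed.
End L2.

Definition ff (a : int) (b : nat) : int := \prod_(i < b) (a - Posz i).

Lemma ffS a b : ff a b.+1 = ff a b * (a - Posz b).
Proof. by rewrite /ff big_ord_recr. Qed.

Lemma ffpos n b : ff (Posz n) b = Posz (n ^_ b).
Proof.
elim: b => [|b IH]; first by rewrite /ff big_ord0 ffactn0.
rewrite ffS IH ffactnSr.
case: (leqP b n) => hb.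
  by rewrite PoszM; congr (_ * _); lia.
by rewrite ffact_small // mul0r mul0n.
Qed.

Lemma ffneg n b : ff (Negz n) b = (-1) ^+ b * Posz ((n + b) ^_ b).
Proof.
elim: b => [|b IH]; first by rewrite /ff big_ord0 ffactn0 expr0 mulr1.
rewrite ffS IH addnS ffactSS PoszM exprS NegzE.
have -> : Posz (n + b).+1 = Posz n + 1 + Posz b by lia.
ring.
Qed.

Lemma binZ_ff a b : binZ a b * Posz (b`!) = ff a b.
Proof.
rewrite /binZ; case: b => [|b]; first by rewrite /ff big_ord0 fact0 mulr1.
rewrite /=; case: a => n.
  by rewrite /= -PoszM bin_ffact ffpos.
have -> : (0 <= Negz n) = false by [].
rewrite /= ffneg -mulrA -PoszM.
have -> : (n.+1 + b.+1 - 1 = n + b.+1)%N by lia.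
by rewrite bin_ffact.
Qed.

Lemma fE k : Posz (2 * k)`! = 2 ^+ k * Posz k`! * O k.
Proof.
elim: k => [|k IH]; first by rewrite /O big_ord0 fact0 expr0 !mulr1.
have -> : (2 * k.+1 = (2 * k).+2)%N by lia.
rewrite !factS !PoszM IH /O big_ord_recr /= -/(O k) exprS.
have -> : Posz (2 * k).+2 = 2 * Posz k + 2 by lia.
have -> : Posz (2 * k).+1 = 2 * Posz k + 1 by lia.
have -> : Posz (2 * k + 1) = 2 * Posz k + 1 by lia.
have -> : Posz k.+1 = Posz k + 1 by lia.
ring.
Qed.

Lemma fO k : Posz (2 * k + 1)`! = 2 ^+ k * Posz k`! * O k.+1.
Proof.
rewrite addn1 factS PoszM fE /O big_ord_recr /= -/(O k).
have -> : Posz (2 * k).+1 = 2 * Posz k + 1 by lia.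
have -> : Posz (2 * k + 1) = 2 * Posz k + 1 by lia.
ring.
Qed.

Lemma factz_neq0 k : Posz k`! != 0.
Proof. by rewrite eqz_nat -lt0n fact_gt0. Qed.

Lemma two_neq0 k : (2 : int) ^+ k != 0.
Proof. by rewrite expf_neq0. Qed.

Lemma binA m l : (l <= m)%N ->
  Posz 'C(2 * m, 2 * l) * O l * O (m - l) = Posz 'C(m, l) * O m.
Proof.
move=> hlm.
have hl2 : (2 * l <= 2 * m)%N by lia.
have h1 := bin_fact hl2; rewrite -mulnBr in h1.
have {}h1 := congr1 Posz h1; rewrite !PoszM !fE /= in h1.
have h2 := congr1 Posz (bin_fact hlm); rewrite !PoszM /= in h2.
apply: (@mulIf _ (2 ^+ m * Posz l`! * Posz (m - l)`!)).
  by rewrite !mulf_neq0 ?two_neq0 ?factz_neq0.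
have e2 : (2 : int) ^+ m = 2 ^+ l * 2 ^+ (m - l) by rewrite -exprD subnKC.
transitivity (Posz 'C(2 * m, 2 * l) *
  (2 ^+ l * Posz l`! * O l * (2 ^+ (m - l) * Posz (m - l)`! * O (m - l)))).
  by rewrite e2; ring.
rewrite h1 -h2; ring.
Qed.

Lemma ffsplit w n : ff (2 * w - 1) (2 * n + 1) =
  (\prod_(j < n.+1) (2 * w - Posz (2 * j + 1))) * 2 ^+ n * ff (w - 1) n.
Proof.
elim: n => [|n IH].
  by rewrite /ff !big_ord_recr !big_ord0 /=; ring.
have -> : (2 * n.+1 + 1 = (2 * n + 1).+2)%N by lia.
rewrite ffS ffS IH [in RHS]big_ord_recr /= exprS ffS.
have -> : Posz (2 * n + 1).+1 = 2 * Posz n + 2 by lia.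
have -> : Posz (2 * n + 1) = 2 * Posz n + 1 by lia.
have -> : Posz (2 * n.+1 + 1) = 2 * Posz n + 3 by lia.
ring.
Qed.

Lemma binB w n : binZ (2 * w - 1) (2 * n + 1) * O n.+1 =
  binZ (w - 1) n * \prod_(j < n.+1) (2 * w - Posz (2 * j + 1)).
Proof.
have h1 := binZ_ff (2 * w - 1) (2 * n + 1).
rewrite ffsplit fO -(binZ_ff (w - 1) n) in h1.
apply: (@mulIf _ (2 ^+ n * Posz n`!)).
  by rewrite !mulf_neq0 ?two_neq0 ?factz_neq0.
transitivity (binZ (2 * w - 1) (2 * n + 1) * (2 ^+ n * Posz n`! * O n.+1)); first by ring.
rewrite h1; ring.
Qed.

Lemma GD p q : G (p + q) (- Posz (2 * p)%N) = (-1) ^+ p * O p * O q.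
Proof.
rewrite /G big_split_ord /= -/(G p _) Gneg /O; congr (_ * _).
apply: eq_bigr => i _ /=; lia.
Qed.

Lemma signzD x y : signz (x + y) = signz x * signz y.
Proof.
rewrite /signz -exprD.
case hx: (odd `|x|%N); case hy: (odd `|y|%N) => /=.
- have -> : odd (absz (x + y)) = false by lia. by rewrite expr0 -signr_odd.
- have -> : odd (absz (x + y)) = true by lia. by [].
- have -> : odd (absz (x + y)) = true by lia. by [].
- have -> : odd (absz (x + y)) = false by lia. by [].
Qed.

Lemma signzP (p : nat) : signz (Posz p) = (-1) ^+ p.
Proof. by rewrite /signz /= signr_odd. Qed.

Lemma signz2 x : signz (x * 2) = 1.
Proof. by rewrite /signz abszM /= oddM andbF. Qed.

Lemma ffSl a k : ff a k.+1 = a * ff (a - 1) k.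
Proof.
rewrite /ff big_ord_recl /= subr0; congr (_ * _); apply: eq_bigr => i _; rewrite /bump /=; lia.
Qed.

Lemma binZshift N k : binZ N k.+1 * Posz k.+1 = N * binZ (N - 1) k.
Proof.
apply: (@mulIf _ (Posz k`!)); first exact: factz_neq0.
rewrite -mulrA -PoszM -factS binZ_ff ffSl -binZ_ff; ring.
Qed.

Theorem lemma3p3 (tau : int) (alpha beta a b : nat)
  (ha : odd a) (hb : odd b) (halpha : (1 <= alpha)%N) :
  let m : nat := (2 ^ alpha * a)%N in
  let l : nat := (2 ^ beta * b)%N in
  let t1 : int :=
    signz (m%:Z * tau + m%:Z + l%:Z) * ('C(m, l))%:Z
      * binZ (m%:Z * tau + l%:Z - 1) (m - 1)%N in
  let t2 : int :=
    if beta == 0%N then 0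
    else signz (divz (m%:Z * tau + m%:Z + l%:Z) 2) * ('C(m %/ 2, l %/ 2)%N)%:Z
      * binZ (divz (m%:Z * tau + l%:Z) 2 - 1) (m %/ 2 - 1)%N in
  (((2 ^ (2 * alpha))%N)%:Z %| t1 - t2)%Z.
Proof.
cbv zeta.
set m := (2 ^ alpha * a)%N.
set l := (2 ^ beta * b)%N.
have hl0 : l = (2 ^ beta * b)%N by [].
clearbody l.
have hd : Posz (2 ^ (2 * alpha))%N = (2 : int) ^+ (2 * alpha) by rewrite -natz natrX.
rewrite hd.
have h2a : (2 ^ alpha = 2 * 2 ^ (alpha - 1))%N by rewrite -expnS subn1 prednK.
set m' := (2 ^ (alpha - 1) * a)%N.
have hm : m = (2 * m')%N by rewrite /m /m' h2a mulnA.
have hmz : Posz m = 2 ^+ alpha * Posz a by rewrite /m PoszM -natz natrX.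
have hdm : ((2 : int) ^+ (2 * alpha) %| (Posz (2 * m')) ^+ 2)%Z.
  by rewrite -hm hmz exprMn -exprM mulnC; apply: dvdz_mulr.
have ha0 : (0 < a)%N by lia.
have hm'0 : (0 < m')%N by rewrite /m' muln_gt0 expn_gt0 ha0.
clearbody m m'.
case: beta hl0 => [|beta'] hl0.
  rewrite /= subr0.
  rewrite expn0 mul1n in hl0; subst l.
  have hC : ((2 : int) ^+ alpha %| Posz 'C(m, b))%Z.
    have hb0 : (0 < b)%N by lia.
    have e1 : (Posz 'C(m, b) * Posz b = Posz m * Posz 'C(m.-1, b.-1))%R.
      rewrite -!PoszM; congr Posz.
      by rewrite mul_bin_diag prednK // mulnC.
    have cb : coprimez (2 ^+ alpha) (Posz b) by apply: cop2.
    rewrite -(Gauss_dvdzl _ cb).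
    by rewrite e1 hmz -mulrA; apply: dvdz_mulr.
  have hB : ((2 : int) ^+ alpha %| binZ (Posz m * tau + Posz b - 1) (m - 1)%N)%Z.
    set N := Posz m * tau + Posz b.
    have hN : odd (absz N) by rewrite /N hm; lia.
    rewrite -(Gauss_dvdzl _ (@cop2 alpha N hN)) mulrC -binZshift.
    rewrite (_ : ((m - 1).+1)%N = m); last by lia.
    by rewrite hmz mulrCA; apply: dvdz_mulr; apply: dvdzz.
  rewrite mul2n -addnn exprD -mulrA; apply: dvdz_mull.
  exact: dvdz_mul.
set l' := (2 ^ beta' * b)%N.
have hl : l = (2 * l')%N by rewrite hl0 /l' expnS mulnA.
clearbody l'; clear hl0; subst l m.
rewrite /=.
have -> : ((2 * m') %/ 2 = m')%N by lia.
have -> : ((2 * l') %/ 2 = l')%N by lia.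
have -> : Posz (2 * m') * tau + Posz (2 * m') + Posz (2 * l') =
          (Posz m' * tau + Posz m' + Posz l') * 2 by rewrite !PoszM; ring.
have -> : Posz (2 * m') * tau + Posz (2 * l') =
          (Posz m' * tau + Posz l') * 2 by rewrite !PoszM; ring.
rewrite !mulzK // signz2 mul1r.
case: (leqP l' m') => hlm; last first.
  rewrite !bin_small //; last by lia.
  by rewrite !mulr0 !mul0r subrr dvdz0.
set N := Posz m' * tau + Posz l'.
have -> : N * 2 - 1 = 2 * N - 1 by ring.
have -> : (2 * m' - 1 = 2 * m'.-1 + 1)%N by lia.
have hB := binB N m'.-1.
rewrite (prednK hm'0) in hB.
have hA := @binA m' l' hlm.
have hL := @L2 (2 * alpha) m' hdm (- Posz (m' - l')) tau.
have hGD := GD (m' - l') l'; rewrite subnK // in hGD.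
rewrite (_ : 2 * - Posz (m' - l') = - Posz (2 * (m' - l'))) in hL; last by lia.
rewrite hGD in hL.
rewrite (_ : - Posz (2 * (m' - l')) + Posz (2 * m') * tau = 2 * N - Posz (2 * m')) in hL;
  last by rewrite /N !PoszM; lia.
rewrite -revodd in hL.
set Nm := \prod_(j < m') (2 * N - Posz (2 * j + 1)) in hB hL.
have hsg : signz (Posz m' * tau + Posz m' + Posz l') =
           signz (Posz m' * tau) * (-1) ^+ (m' - l').
  rewrite -addrA signzD; congr (_ * _).
  rewrite -PoszD signzP -[LHS]signr_odd -[RHS]signr_odd; congr (_ ^+ _); congr nat_of_bool; lia.
rewrite hsg.
set D := O l' * O (m' - l').
have hcop : coprimez ((2 : int) ^+ (2 * alpha)) (D * O m').
  by rewrite !coprimezMr !Ocop.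
rewrite -(Gauss_dvdzl _ hcop).
rewrite subn1.
have -> : (Posz 'C(2 * m', 2 * l') * binZ (2 * N - 1) (2 * m'.-1 + 1) -
   signz (Posz m' * tau) * (-1) ^+ (m' - l') * Posz 'C(m', l') * binZ (N - 1) m'.-1) * (D * O m')
   = (Posz 'C(2 * m', 2 * l') * O l' * O (m' - l')) * (binZ (2 * N - 1) (2 * m'.-1 + 1) * O m')
     - O m' * Posz 'C(m', l') * binZ (N - 1) m'.-1 * (signz (Posz m' * tau) * ((-1) ^+ (m' - l') * D))
  by rewrite /D; ring.
rewrite hA hB.
have -> : Posz 'C(m', l') * O m' * (binZ (N - 1) m'.-1 * Nm) -
   O m' * Posz 'C(m', l') * binZ (N - 1) m'.-1 * (signz (Posz m' * tau) * ((-1) ^+ (m' - l') * D))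
   = O m' * Posz 'C(m', l') * binZ (N - 1) m'.-1 *
     (Nm - signz (Posz m' * tau) * ((-1) ^+ (m' - l') * D)) by ring.
apply: dvdz_mull.
have -> : (-1) ^+ (m' - l') * D = (-1) ^+ (m' - l') * O (m' - l') * O l' by rewrite /D; ring.
exact: hL.
Qed.
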